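(* Let $\pi^m_{k+1}(\cdot|s,\mathbf{a}^{1:m-1})\propto\exp\{\beta_k^{-1}Q^{1:m}_{\boldsymbol{\pi}_{\theta_k}}(s,\mathbf{a}^{1:m-1},\cdot)+\phi^\top(s,\mathbf{a}^{1:m-1},\cdot)\theta_k^m\}$ be the ideal update, $\pi_{\theta^m_{k+1}}$ the log-linear policy with parameter $\theta^m_{k+1}$, and $\pi_{\theta^m_k}$ the current log-linear policy. Then for any $(s,\mathbf{a}^{1:m-1})\in\mathcal{S}\times\mathcal{A}^{m-1}$ (suppressed from notation below), $$ \begin{aligned} &\mathrm{KL}(\pi_*^m\|\pi_{\theta^m_{k+1}})-\mathrm{KL}(\pi_*^m\|\pi_{\theta^m_k})\\ &\le\Big\langle\log\frac{\pi_{\theta^m_{k+1}}}{\pi^m_{k+1}},\ \pi_{\theta^m_k}-\pi_*^m\Big\rangle+\frac{1}{\beta_k}\big\langle A^m_{\boldsymbol{\pi}_{\theta_k}}(s,\mathbf{a}^{1:m-1},\cdot),\ \pi_{\theta^m_k}-\pi_*^m\big\rangle-\frac12\big\|\pi_{\theta^m_{k+1}}-\pi_{\theta^m_k}\big\|_1^2\\ &\quad-\big\langle(\theta^m_{k+1}-\theta^m_k)^\top\phi(s,\mathbf{a}^{1:m-1},\cdot),\ \pi_{\theta^m_k}-\pi_{\theta^m_{k+1}}\big\rangle. \end{aligned} $$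
   Context: Fully cooperative Markov game with agents $\{1,\dots,N\}$, finite state space $\mathcal{S}$, finite individual action space $\mathcal{A}$. Joint policies in sequential conditional form $\boldsymbol{\pi}(\mathbf{a}|s)=\prod_m\pi^m(a^m|s,\mathbf{a}^{1:m-1})$. $Q^{1:m}_{\boldsymbol{\pi}}(s,\mathbf{a}^{1:m})$ is the expected joint action-value given $\mathbf{a}^{1:m}$ when the remaining agents follow $\boldsymbol{\pi}$, and the multi-agent advantage of agent $m$ is $A^m_{\boldsymbol{\pi}}(s,\mathbf{a}^{1:m-1},a^m)=Q^{1:m}_{\boldsymbol{\pi}}(s,\mathbf{a}^{1:m})-Q^{1:m-1}_{\boldsymbol{\pi}}(s,\mathbf{a}^{1:m-1})$. Log-linear policies $\pi_{\theta^m}(a^m|s,\mathbf{a}^{1:m-1})\propto\exp(\phi^\top(s,\mathbf{a}^{1:m-1},a^m)\theta^m)$. $\boldsymbol{\pi}_{\theta_k}$ is the current joint policy with parameters $\theta_k^1,\dots,\theta_k^N$; $\theta^m_{k+1}\in\mathbb{R}^d$ arbitrary; $\beta_k>0$; $\pi_*^m$ is agent $m$'s conditional policy in an optimal joint policy $\boldsymbol{\pi}_*$. $\langle\cdot,\cdot\rangle$ is the inner product over $\mathcal{A}$ and $\mathrm{KL}$ the Kullback–Leibler divergence. *)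

(* Defs.v *)
From HB Require Import structures.
From mathcomp Require Import all_boot all_order all_algebra.
From mathcomp Require Import all_classical all_reals all_analysis.
Set Implicit Arguments. Unset Strict Implicit. Unset Printing Implicit Defensive.
Import Order.TTheory GRing.Theory Num.Theory.
Local Open Scope ring_scope.

(* A per-agent "context" is a pair (s, a^{1:m-1}) with s : S and the prefix of
   actions of the preceding agents given as a sequence of length m-1. *)

Section Defs.
Variables (R : realType) (S A : finType) (d : nat).

Definition dotf (theta v : 'I_d -> R) : R := \sum_(i < d) v i * theta i.

Definition loglin (phi : S -> seq A -> A -> 'I_d -> R) (theta : 'I_d -> R)
  (s : S) (pre : seq A) (a : A) : R :=
  expR (dotf theta (phi s pre a)) / \sum_(b : A) expR (dotf theta (phi s pre b)).

Definition ideal_update (beta : R) (Q : S -> seq A -> A -> R)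
  (phi : S -> seq A -> A -> 'I_d -> R) (theta : 'I_d -> R)
  (s : S) (pre : seq A) (a : A) : R :=
  expR (Q s pre a / beta + dotf theta (phi s pre a)) /
  \sum_(b : A) expR (Q s pre b / beta + dotf theta (phi s pre b)).

Definition advantage (Qm : S -> seq A -> A -> R) (Qm1 : S -> seq A -> R)
  (s : S) (pre : seq A) (a : A) : R := Qm s pre a - Qm1 s pre.
End Defs.

Section Vec.
Variables (R : realType) (A : finType).
Definition inner (f g : A -> R) : R := \sum_(a : A) f a * g a.
(* KL(p || q), with the convention 0 * log(0/q) = 0 (ln 0 = 0 in mathcomp) *)
Definition KL (p q : A -> R) : R := \sum_(a : A) p a * ln (p a / q a).
Definition l1dist (p q : A -> R) : R := \sum_(a : A) `|p a - q a|.
Definition is_dist (p : A -> R) : Prop :=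
  (forall a, 0 <= p a) /\ \sum_(a : A) p a = 1.
End Vec.

(* Main.v *)
Require Import Defs.
From HB Require Import structures.
From mathcomp Require Import all_boot all_order all_algebra.
From mathcomp Require Import all_classical all_reals all_analysis.
From mathcomp Require Import lra ring.
Import Order.TTheory GRing.Theory Num.Theory numFieldNormedType.Exports.
Local Open Scope classical_set_scope.
Local Open Scope ring_scope.

Section K.
Variable R : realType.
Definition hh (y : R) : R := ln y + 4^-1 * y^-1 + (27/4) * (y+2)^-1 - 5/2.

Lemma hh_der (y : R) : 0 < y ->
  is_derive y 1 hh (y^-1 - 4^-1 * y^-2 - (27/4) * (y+2)^-2).
Proof.
move=> y0.
have y2 : (y + 2) != 0 by apply: lt0r_neq0; lra.
have A := is_derive1_ln y0.
have B := is_deriveZ (4^-1 : R) (is_deriveV (lt0r_neq0 y0) (is_derive_id y (1:R))).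
have C := is_deriveZ (27/4 : R) (@is_deriveV R (shift 2) y 1 1 y2 (is_derive_shift y (1:R) 2)).
have D := is_deriveB (is_deriveD (is_deriveD A B) C) (is_derive_cst (5/2 : R) y 1).
have E : hh = ltac:(match type of D with is_derive _ _ ?f _ => exact f end).
  by apply/funext => z /=; rewrite /hh.
rewrite E.
apply: (is_derive_eq D).
rewrite /= /GRing.scale /=. 
rewrite !mulr1 subr0. 
rewrite /shift /=.
lra.
Qed.
End K.


Arguments hh {R}.
Section K.
Variable R : realType.

Lemma dfE (c : R) : 0 < c ->
  c^-1 - 4^-1 * c^-2 - (27/4) * (c+2)^-2 = (c-1)^+3 / (c^+2 * (c+2)^+2).
Proof.
move=> c0.
have c2 : (c + 2) != 0 by apply: lt0r_neq0; lra.
rewrite /GRing.exp /=. field. 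
by rewrite c2 /=; apply: lt0r_neq0.
Qed.

Lemma hh1 : hh 1 = 0 :> R.
Proof. rewrite /hh ln1 invr1 add0r mulr1. have h4 : (4:R) != 0 by apply: lt0r_neq0; lra. have h3 : (1 + 2 : R) != 0 by apply: lt0r_neq0; lra. by field. Qed.

Lemma hh_ge0 (x : R) : 0 < x -> 0 <= hh x.
Proof.
move=> x0.
have cont : forall a b : R, 0 < a -> {within [set` `[a, b]%R], continuous (@hh R)}.
  move=> a b a0; apply: derivable_within_continuous => z; rewrite in_itv /= => /andP [az _].
  by case: (@hh_der R z (lt_le_trans a0 az)).
have [x1|x1|->] := ltgtP x 1; last by rewrite hh1.
- have [c cI E] := MVT x1 (fun c (cI : c \in `]x, 1[) => @hh_der R c (lt_trans x0 (andP cI).1)) (cont _ _ x0).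
  move: cI; rewrite in_itv /= => /andP [xc c1].
  move: E; rewrite hh1 dfE; last by apply: (lt_trans x0 xc).
  move=> E.
  have : hh x = - ((c - 1) ^+ 3 / (c ^+ 2 * (c + 2) ^+ 2) * (1 - x)) by lra.
  move=> ->; rewrite oppr_ge0 mulr_le0_ge0 //; last by lra.
  apply: mulr_le0_ge0; last by rewrite invr_ge0 mulr_ge0 // exprn_ge0 //; lra.
  have -> : (c - 1) ^+ 3 = - ((1 - c) ^+ 3) by ring.
  by rewrite oppr_le0 exprn_ge0 //; lra.
- have [c cI E] := MVT x1 (fun c (cI : c \in `]1, x[) => @hh_der R c (lt_trans ltr01 (andP cI).1)) (cont _ _ ltr01).
  move: cI; rewrite in_itv /= => /andP [xc c1].
  move: E; rewrite hh1 dfE; last by apply: (lt_trans ltr01 xc).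
  move=> E.
  have : hh x = ((c - 1) ^+ 3 / (c ^+ 2 * (c + 2) ^+ 2) * (x - 1)) by lra.
  move=> ->; rewrite mulr_ge0 //; last by lra.
  rewrite mulr_ge0 //; last by rewrite invr_ge0 mulr_ge0 // exprn_ge0 //; lra.
  by rewrite exprn_ge0 //; lra.
Qed.

End K.


Section P.
Variable R : realType.

Lemma key2 (x : R) : 0 < x -> 3 * (x-1)^+2 / (2*(x+2)) <= x * ln x - x + 1.
Proof.
move=> x0.
have H := @hh_ge0 R x x0; rewrite /hh in H.
have H2 : x * (5/2 - 4^-1*x^-1 - 27/4*(x+2)^-1) <= x * ln x.
  by rewrite ler_pM2l //; lra.
have x2 : x + 2 != 0 by apply: lt0r_neq0; lra.
have E : x * (5/2 - 4^-1*x^-1 - 27/4*(x+2)^-1) - x + 1 = 3 * (x-1)^+2 / (2*(x+2)).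
  field. by rewrite x2 /= lt0r_neq0.
lra.
Qed.

Lemma key3 (p q : R) : 0 < p -> 0 < q ->
  3 * (p-q)^+2 / (2*(p+2*q)) <= p * ln (p/q) - p + q.
Proof.
move=> p0 q0.
have x0 : 0 < p / q by rewrite divr_gt0.
have H := @key2 _ x0.
have q1 : q != 0 by apply: lt0r_neq0.
have pq : p + 2 * q != 0 by apply: lt0r_neq0; lra.
have pq2 : p / q + 2 != 0 by apply: lt0r_neq0; rewrite addr_gt0.
have E1 : q * (3 * (p/q-1)^+2 / (2*(p/q+2))) = 3 * (p-q)^+2 / (2*(p+2*q)).
  field. by rewrite q1 pq.
have E2 : q * (p/q * ln (p/q) - p/q + 1) = p * ln (p/q) - p + q.
  field. done.
rewrite -E1 -E2 ler_pM2l //.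
Qed.

Lemma cauchy (A : finType) (a w : A -> R) : (forall i, 0 < w i) ->
  0 < \sum_i w i ->
  (\sum_i a i) ^+ 2 <= (\sum_i w i) * \sum_i (a i ^+ 2 / w i).
Proof.
move=> wp Sp.
set Sa := \sum_i a i; set Sw := \sum_i w i; set m := Sa / Sw.
have H : 0 <= \sum_i (a i - m * w i) ^+ 2 / w i.
  by apply: sumr_ge0 => i _; rewrite divr_ge0 // ?sqr_ge0 // ltW.
have E : \sum_i (a i - m * w i) ^+ 2 / w i =
   \sum_i (a i ^+ 2 / w i) - (2 * m) * Sa + m ^+ 2 * Sw.
  rewrite /Sa /Sw !mulr_sumr -sumrB -big_split /=.
  apply: eq_bigr => i _. have wi := lt0r_neq0 (wp i). field. done.
rewrite E in H.
have Sw0 : Sw != 0 by apply: lt0r_neq0.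
have E2 : Sw * (\sum_i (a i ^+ 2 / w i) - (2 * m) * Sa + m ^+ 2 * Sw)
   = Sw * \sum_i (a i ^+ 2 / w i) - Sa ^+ 2.
  rewrite /m. field. done.
have : 0 <= Sw * (\sum_i (a i ^+ 2 / w i) - (2 * m) * Sa + m ^+ 2 * Sw).
  by rewrite mulr_ge0 // ltW.
rewrite E2 subr_ge0 //.
Qed.

Lemma pinsker (A : finType) (p q : A -> R) :
  (forall a, 0 < p a) -> (forall a, 0 < q a) ->
  \sum_a p a = 1 -> \sum_a q a = 1 ->
  2^-1 * (l1dist p q) ^+ 2 <= KL p q.
Proof.
move=> pp qp s1 s2.
have two : (0:R) < 2 by lra.
have three : (0:R) < 3 by lra.
have C := @cauchy A (fun a => `|p a - q a|) (fun a => p a + 2 * q a)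
  (fun a => addr_gt0 (pp a) (mulr_gt0 two (qp a))).
have Sw : \sum_a (p a + 2 * q a) = 3.
  by rewrite big_split /= -mulr_sumr s1 s2; lra.
rewrite Sw in C; have {C} C := C three.
have K : KL p q = \sum_a (p a * ln (p a / q a) - p a + q a).
  rewrite /KL big_split /= sumrB s1 s2; lra.
have K2 : \sum_a 3 * (p a - q a)^+2 / (2*(p a + 2 * q a)) <= KL p q.
  by rewrite K; apply: ler_sum => a _; apply: key3.
have E : \sum_a 3 * (p a - q a)^+2 / (2*(p a + 2 * q a)) =
   2^-1 * (3 * \sum_a (`|p a - q a| ^+ 2 / (p a + 2 * q a))).
  rewrite !mulr_sumr; apply: eq_bigr => a _.
  rewrite real_normK ?num_real //.
  have w : p a + 2 * q a != 0 by apply: lt0r_neq0; apply: addr_gt0 (pp a) (mulr_gt0 two (qp a)).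
  field. by rewrite w.
rewrite /l1dist; lra.
Qed.
End P.


Lemma Zpos {R : realType} {A : finType} (a0 : A) (c : A -> R) : 0 < \sum_b expR (c b).
Proof.
rewrite (bigD1 a0) //=; apply: (lt_le_trans (expR_gt0 (c a0))).
by rewrite lerDl; apply: sumr_ge0 => b _; exact: expR_ge0.
Qed.

Lemma sum_norm {R : realType} {A : finType} (a0 : A) (c : A -> R) :
  \sum_a expR (c a) / \sum_b expR (c b) = 1.
Proof. by rewrite -mulr_suml mulfV // lt0r_neq0 // (Zpos a0). Qed.

Lemma ln_norm {R : realType} {A : finType} (a0 : A) (c : A -> R) a :
  ln (expR (c a) / \sum_b expR (c b)) = c a - ln (\sum_b expR (c b)).
Proof. by rewrite ln_div ?posrE ?expR_gt0 ?(Zpos a0) // expRK. Qed.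

Lemma pos_norm {R : realType} {A : finType} (a0 : A) (c : A -> R) a :
  0 < expR (c a) / \sum_b expR (c b).
Proof. by rewrite divr_gt0 ?expR_gt0 ?(Zpos a0). Qed.

Theorem lemma7 (R : realType) (S A : finType) (d N : nat) (m : 'I_N)
  (phi : S -> seq A -> A -> 'I_d -> R)
  (Qm : S -> seq A -> A -> R) (Qm1 : S -> seq A -> R)
  (theta_k theta_k1 : 'I_d -> R) (beta_k : R)
  (pistar : S -> seq A -> A -> R) :
  0 < beta_k ->
  (forall s pre, size pre = val m -> is_dist (pistar s pre)) ->
  (forall s pre, size pre = val m ->
     Qm1 s pre = \sum_(a : A) loglin phi theta_k s pre a * Qm s pre a) ->
  forall (s : S) (pre : seq A), size pre = val m ->
  let pk := loglin phi theta_k s pre in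
  let pk1 := loglin phi theta_k1 s pre in
  let pid := ideal_update beta_k Qm phi theta_k s pre in
  let ps := pistar s pre in
  KL ps pk1 - KL ps pk <=
    inner (fun a => ln (pk1 a / pid a)) (fun a => pk a - ps a)
    + beta_k^-1 * inner (advantage Qm Qm1 s pre) (fun a => pk a - ps a)
    - 2^-1 * (l1dist pk1 pk) ^+ 2
    - inner (fun a => dotf (fun i => theta_k1 i - theta_k i) (phi s pre a))
            (fun a => pk a - pk1 a).
Proof.
move=> hb hdist _ s pre hs; cbv zeta.
set pk := loglin phi theta_k s pre.
set pk1 := loglin phi theta_k1 s pre.
set pid := ideal_update beta_k Qm phi theta_k s pre.
set ps := pistar s pre.
have [ps0 ps1] := hdist s pre hs.
have a0 : A.
  case: (pickP (@predT A)) => [a0 _|h]; first exact a0.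
  exfalso; move: ps1; rewrite big_pred0 // => /esym/eqP; rewrite oner_eq0.
  done.
set fk := fun a => dotf theta_k (phi s pre a).
set g := fun a => dotf (fun i => theta_k1 i - theta_k i) (phi s pre a).
set Q := fun a => Qm s pre a.
have lin : forall a, dotf theta_k1 (phi s pre a) = fk a + g a.
  by move=> a; rewrite /fk /g /dotf -big_split /=; apply: eq_bigr => i _; ring.
set L0 := ln (\sum_b expR (fk b)).
set L1 := ln (\sum_b expR (fk b + g b)).
set Li := ln (\sum_b expR (Q b / beta_k + fk b)).
have pkE : pk = fun a => expR (fk a) / \sum_b expR (fk b) by [].
have pk1E : pk1 = fun a => expR (fk a + g a) / \sum_b expR (fk b + g b).
  by apply/funext => a; rewrite /pk1 /loglin lin; under eq_bigr do rewrite lin.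
have pidE : pid = fun a => expR (Q a / beta_k + fk a) / \sum_b expR (Q b / beta_k + fk b) by [].
have pkP a : 0 < pk a by rewrite pkE (pos_norm a0 fk).
have pk1P a : 0 < pk1 a by rewrite pk1E (pos_norm a0 (fun b => fk b + g b)).
have pidP a : 0 < pid a by rewrite pidE (pos_norm a0 (fun b => Q b / beta_k + fk b)).
have pkL a : ln (pk a) = fk a - L0 by rewrite pkE (ln_norm a0 fk).
have pk1L a : ln (pk1 a) = fk a + g a - L1 by rewrite pk1E (ln_norm a0 (fun b => fk b + g b)).
have pidL a : ln (pid a) = Q a / beta_k + fk a - Li by rewrite pidE (ln_norm a0 (fun b => Q b / beta_k + fk b)).
have pkS : \sum_a pk a = 1 by rewrite pkE (sum_norm a0 fk).
have pk1S : \sum_a pk1 a = 1 by rewrite pk1E (sum_norm a0 (fun b => fk b + g b)).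
have LHS : KL ps pk1 - KL ps pk = \sum_a ps a * (L1 - L0 - g a).
  rewrite /KL -sumrB; apply: eq_bigr => a _.
  have := ps0 a; rewrite le_eqVlt => /orP [/eqP E| h]; first by rewrite /ps -E !mul0r subrr.
  rewrite (@ln_div _ (ps a) (pk1 a)) ?posrE // (@ln_div _ (ps a) (pk a)) ?posrE // pkL pk1L; ring.
have T1 : inner (fun a => ln (pk1 a / pid a)) (fun a => pk a - ps a)
    = \sum_a (g a - L1 - Q a / beta_k + Li) * (pk a - ps a).
  rewrite /inner; apply: eq_bigr => a _.
  rewrite (@ln_div _ (pk1 a) (pid a)) ?posrE // pk1L pidL; ring.
have T2 : beta_k^-1 * inner (advantage Qm Qm1 s pre) (fun a => pk a - ps a)
    = \sum_a beta_k^-1 * (Q a - Qm1 s pre) * (pk a - ps a).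
  rewrite /inner mulr_sumr; apply: eq_bigr => a _; rewrite /advantage /Q; ring.
have KLp : KL pk1 pk = \sum_a pk1 a * (g a - L1 + L0).
  rewrite /KL; apply: eq_bigr => a _; rewrite (@ln_div _ (pk1 a) (pk a)) ?posrE // pk1L pkL; ring.
have Pin := @pinsker R A pk1 pk pk1P pkP pk1S pkS.
rewrite LHS T1 T2.
rewrite KLp in Pin.
set X := 2^-1 * _ in Pin *.
rewrite /inner -/g.
have Z : \sum_a (g a - L1 - Q a / beta_k + Li) * (pk a - ps a)
   + \sum_a beta_k^-1 * (Q a - Qm1 s pre) * (pk a - ps a)
   - \sum_a g a * (pk a - pk1 a)
   - \sum_a ps a * (L1 - L0 - g a)
   - \sum_a pk1 a * (g a - L1 + L0) = 0.
  rewrite -big_split /= -!sumrB.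
  rewrite (eq_bigr (fun a => (Li - L1 - beta_k^-1 * Qm1 s pre) * (pk a - ps a)
                            + (L1 - L0) * (pk1 a - ps a))); last first.
    move=> a _; rewrite /Q; ring.
  rewrite big_split /= -!mulr_sumr !sumrB pkS pk1S ps1 subrr !mulr0 addr0 //.
lra.
Qed.
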